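(* Consider the $q$-composite random key predistribution scheme on $n$ sensors with key pool size $P_n$ and key ring size $K_n$, where $q$ is a fixed positive integer (not depending on $n$) and $q\le K_n\le P_n$. Suppose an adversary captures a uniformly random set of $m=m(n)$ sensors and learns all keys in their key rings, and let $p_{\textnormal{compromised}}$ denote the probability that the secure link between two (distinct) non-captured sensors is compromised, conditioned on these two sensors sharing at least $q$ keys. If $$m = o\!\left(\frac{P_n}{K_n}\right)\quad (n\to\infty),$$ then $p_{\textnormal{compromised}} = o(1)$, i.e., $p_{\textnormal{compromised}}\to 0$ as $n\to\infty$.
   Context: In the $q$-composite scheme, each of the $n$ sensors independently receives a key ring consisting of $K_n$ distinct keys chosen uniformly at random among all $K_n$-subsets of a pool of $P_n$ keys. Two sensors have a secure link if and only if their key rings share at least $q$ keys. The secure link between two non-captured sensors is compromised if and only if every key shared by their two key rings belongs to the key ring of at least one captured sensor. All asymptotics are as $n\to\infty$; $x_n=o(y_n)$ means $x_n/y_n\to 0$. *)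

(* Defs.v *)
From HB Require Import structures.
From mathcomp Require Import all_boot all_order all_algebra.
From mathcomp Require Import all_classical all_reals all_analysis.
Set Implicit Arguments. Unset Strict Implicit. Unset Printing Implicit Defensive.
Import Order.TTheory GRing.Theory Num.Theory.
Local Open Scope ring_scope.

(* q-composite scheme with n sensors (labelled by 'I_n), key pool 'I_P,
   key rings of size K.  An outcome of the random experiment consists of
   - the key rings  r : {ffun 'I_n -> {set 'I_P}}  (each ring a K-subset;
     rings are independent and uniform, i.e. the assignment r is uniform
     among those with all rings of size K),
   - the captured set  A : {set 'I_n}  with #|A| = m (uniform, independent),
   - an ordered pair (i, j) of sensors (uniform).
   All these choices are uniform and independent, so probabilities are
   ratios of cardinalities in the finite product space. *)

Definition outcome (n P : nat) : finType :=
  ({ffun 'I_n -> {set 'I_P}} * {set 'I_n} * 'I_n * 'I_n)%type.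

Definition valid_outcome (n P K m : nat) (w : outcome n P) : bool :=
  let: (r, A, _, _) := w in [forall s, #|r s| == K] && (#|A| == m)%N.

Definition secure_link (n P q : nat) (r : {ffun 'I_n -> {set 'I_P}}) (i j : 'I_n) :=
  (q <= #|r i :&: r j|)%N.

Definition compromised (n P : nat) (r : {ffun 'I_n -> {set 'I_P}})
  (A : {set 'I_n}) (i j : 'I_n) :=
  (r i :&: r j) \subset \bigcup_(a in A) r a.

Definition cond_event (n P K m q : nat) : {set outcome n P} :=
  [set w | valid_outcome K m w &&
    (let: (r, A, i, j) := w in
      [&& i != j, i \notin A, j \notin A & secure_link q r i j])].

Definition comp_event (n P K m q : nat) : {set outcome n P} :=
  [set w in cond_event n P K m q |
    let: (r, A, i, j) := w in compromised r A i j].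

(* p_compromised: conditional probability that the link between two
   distinct non-captured sensors is compromised, given that they share at
   least q keys (0 if the conditioning event is empty). *)
Definition p_compromised (R : realType) (n P K m q : nat) : R :=
  (#|comp_event n P K m q|)%:R / (#|cond_event n P K m q|)%:R.

(* Main.v *)
Require Import Defs.
From HB Require Import structures.
From mathcomp Require Import all_boot all_order all_algebra all_fingroup.
Set Implicit Arguments. Unset Strict Implicit. Unset Printing Implicit Defensive.

Section Comb.
Variables (n P K m q : nat) (a : 'I_n).
Local Notation O := (outcome n P).

Definition xk (w : O) : option 'I_P := let: (r,_,i,j) := w in [pick z in r i :&: r j].

Definition swapring (w : O) (y : 'I_P) : O :=
  let: (r,A,i,j) := w in
  if (a != i) && (a != j) then
    match [pick z in r i :&: r j] with
    | Some x => ([ffun b => if b == a then tperm x y @: r b else r b], A, i, j)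
    | None => w end
  else w.

Definition Phi (p : O * 'I_P) : O * 'I_P := (swapring p.1 p.2, p.2).

Lemma tperm_imsetK (x y : 'I_P) (S : {set 'I_P}) : tperm x y @: (tperm x y @: S) = S.
Proof. by rewrite -imset_comp (eq_imset _ (tpermK x y)) imset_id. Qed.

Lemma PhiK : involutive Phi.
Proof.
case=> [[[[r A] i] j] y]; rewrite /Phi /swapring /=.
case: ifP => [/andP[ai aj]|nai]; last by rewrite nai.
case E: [pick z in r i :&: r j] => [x|] /=; last by rewrite ai aj /= E.
rewrite ai aj /= !ffunE eq_sym (negbTE ai) eq_sym (negbTE aj) E.
congr (_, _, _, _, _).
apply/ffunP=> b; rewrite !ffunE; case: eqP => [->|//].
by rewrite tperm_imsetK.
Qed.

Definition Fa : {set O} := [set w in cond_event n P K m q | let: (_,A,_,_) := w in a \in A].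
Definition Ea : {set O} := [set w in Fa | if xk w is Some x then let: (r,_,_,_) := w in x \in r a else false].
Definition ring (w : O) := let: (r,_,_,_) := w in r a.
Definition D1 : {set O * 'I_P} := [set p | (p.1 \in Fa) && (p.2 \in ring p.1)].

Lemma Phi_sub : Phi @: setX Ea setT \subset D1.
Proof.
apply/subsetP => p /imsetP [[w y] /setXP [wE _] ->].
move: wE; case: w => [[[r A] i] j].
rewrite /Ea /Fa /cond_event !inE /= /valid_outcome.
move=> /andP [/andP [/andP [/andP [/forallP vr /eqP cA] /and4P [ij iA jA sec]] aA] Hx].
have ai : a != i by apply: contraNneq iA => <-.
have aj : a != j by apply: contraNneq jA => <-.
rewrite /Phi /= ai aj /=.
move: Hx; case: pickP => [x Hx xa|//].
rewrite /secure_link /ring !ffunE (eq_sym i a) (negbTE ai) (eq_sym j a) (negbTE aj) eqxx.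
rewrite cA eqxx ij iA jA aA /= andbT. move: sec; rewrite /secure_link => -> /=.
rewrite !andbT; apply/andP; split; last by apply/imsetP; exists x => //; rewrite tpermL.
apply/forallP=> b; rewrite ffunE; case: (b =P a) => _; last exact: vr.
by rewrite card_imset ?vr //; apply: perm_inj.
Qed.

Lemma valid_ring w : w \in Fa -> #|ring w| == K.
Proof.
case: w => [[[r A] i] j]; rewrite /Fa /cond_event !inE /= /valid_outcome.
by case/andP => /andP [/andP [/forallP vr _] _] _; apply: vr.
Qed.

Lemma card_D1 : #|D1| = #|Fa| * K.
Proof.
rewrite -sum1_card big_mkcond /=.
transitivity (\sum_(w : O) \sum_(y : 'I_P) (if (w, y) \in D1 then 1 else 0)).
  by rewrite pair_bigA; apply: eq_bigr => -[w y] _.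
rewrite -sum_nat_cond_const.
rewrite [RHS]big_mkcond /=.
apply: eq_bigr => w _.
have E : (w \in Fa) = ((w \in cond_event n P K m q) && (let: (_, A, _, _) := w in a \in A)) by rewrite inE.
rewrite -E; case: ifP => wF.
  rewrite -(eqP (valid_ring wF)) -sum1_card [RHS]big_mkcond /=.
  by apply: eq_bigr => y _; rewrite /D1 inE /= wF.
by rewrite big1 // => y _; rewrite /D1 inE /= wF.
Qed.

Lemma card_Ea : #|Ea| * P <= #|Fa| * K.
Proof.
have := subset_leq_card Phi_sub.
rewrite card_imset; last exact: can_inj PhiK.
by rewrite cardsX cardsT card_ord card_D1.
Qed.
End Comb.

Lemma comp_sub n P K m q (w : outcome n P) : (0 < q)%N ->
  w \in comp_event n P K m q -> exists a, w \in @Ea n P K m q a.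
Proof.
move=> q0; rewrite /comp_event inE => /andP [wc]; move: wc.
case: w => [[[r A] i] j] wc comp.
have := wc; rewrite /cond_event inE => /andP [_ /and4P [_ _ _ sec]].
case E: [pick z in r i :&: r j] => [x|]; last first.
  move: E; case: pickP => [//|H0 _].
  move: sec; rewrite /secure_link; suff -> : #|r i :&: r j| = 0 by rewrite leqNgt q0.
  apply/eqP; rewrite cards_eq0; apply/eqP/setP => z; rewrite inE in_set0 -in_setI; exact: H0.
have Hx : x \in r i :&: r j by move: E; case: pickP => // z Hz [<-].
have : x \in \bigcup_(a in A) r a by apply: (subsetP comp).
case/bigcupP => a aA xa; exists a.
rewrite /Ea /Fa !inE /= /xk E xa aA andbT. rewrite andbT; move: wc; rewrite inE; exact.
Qed.

Lemma count_main n P K m q : (0 < q)%N ->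
  #|comp_event n P K m q| * P <= m * K * #|cond_event n P K m q|.
Proof.
move=> q0.
have h1 : #|comp_event n P K m q| <= \sum_(a : 'I_n) #|@Ea n P K m q a|.
  have -> : \sum_(a : 'I_n) #|@Ea n P K m q a| =
     \sum_(a : 'I_n) \sum_(w : outcome n P) (if w \in @Ea n P K m q a then 1 else 0).
    by apply: eq_bigr => a _; rewrite -sum1_card big_mkcond.
  rewrite exchange_big /= -sum1_card [X in X <= _]big_mkcond; apply: leq_sum => w _.
  case: ifP => // wc; have [a wa] := comp_sub q0 wc.
  by rewrite (bigD1 a) //= wa; exact: leq_addr.
have h2 : \sum_(a : 'I_n) #|@Fa n P K m q a| = m * #|cond_event n P K m q|.
  have -> : \sum_(a : 'I_n) #|@Fa n P K m q a| =
     \sum_(a : 'I_n) \sum_(w : outcome n P) (if w \in @Fa n P K m q a then 1 else 0).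
    by apply: eq_bigr => a _; rewrite -sum1_card big_mkcond.
  rewrite exchange_big /= -sum1_card big_distrr /= [RHS]big_mkcond /=; apply: eq_bigr => w _.
  case: ifP => wc; last first.
    by rewrite big1 // => a _; rewrite /Fa inE wc.
  move: wc; case: w => [[[r A] i] j] wc.
  have cA : #|A| = m.
    by move: wc; rewrite inE => /andP [/andP [_ /eqP]].
  rewrite muln1 -[RHS]cA -sum1_card [RHS]big_mkcond; apply: eq_bigr => a _.
  by rewrite /Fa in_set wc.
apply: (@leq_trans ((\sum_(a : 'I_n) #|@Ea n P K m q a|) * P)); first by rewrite leq_mul2r h1 orbT.
rewrite big_distrl /=.
apply: (@leq_trans (\sum_(a : 'I_n) #|@Fa n P K m q a| * K)).
  by apply: leq_sum => a _; apply: card_Ea.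
by rewrite -big_distrl /= h2 mulnAC.
Qed.

From mathcomp Require Import all_classical all_reals all_analysis.
Import Order.TTheory GRing.Theory Num.Theory.
Local Open Scope ring_scope.
Local Open Scope classical_set_scope.

Theorem theorem1 (R : realType) (q : nat) (P K m : nat -> nat) :
  (0 < q)%N ->
  (forall n, (q <= K n)%N /\ (K n <= P n)%N) ->
  (fun n => (m n)%:R / ((P n)%:R / (K n)%:R) : R) @ \oo --> 0 ->
  (fun n => p_compromised R n (P n) (K n) (m n) q) @ \oo --> 0.
Proof.
move=> q0 hK hm.
have H : \forall n \near \oo, (0 : R) <= p_compromised R n (P n) (K n) (m n) q <= (m n)%:R / ((P n)%:R / (K n)%:R).
  near=> n.
have [hq hP] := hK n.
have K0 : (0 < K n)%N by apply: leq_trans hq.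
have P0 : (0 < P n)%N by apply: leq_trans hP.
have u0 : (0 : R) <= (m n)%:R / ((P n)%:R / (K n)%:R) by apply: divr_ge0 => //; apply: divr_ge0.
rewrite /p_compromised; apply/andP; split; first by apply: divr_ge0.
have [d0|d0] := eqVneq #|cond_event n (P n) (K n) (m n) q| 0%N.
  by rewrite d0 invr0 mulr0.
rewrite invf_div mulrA ler_pdivrMr ?ltr0n ?lt0n // mulrAC ler_pdivlMr ?ltr0n //.
by rewrite -!natrM ler_nat count_main.
Unshelve. all: end_near.
exact: (squeeze_cvgr H (cvg_cst 0) hm).
Qed.
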